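(* Let $(\Omega,\mathscr{F},\mu)$ be a complete probability space, $K\subset L^{0}(\mu)$ absolutely convex, closed in probability and bounded in probability, and $E_K=\mathrm{span}(K)$. Let $\tau$ be a locally convex equicontinuous Köthe topology on $E_K$ with the Krein-Šmulian property which is $F$-regular. Then for every $g\in F$ the set $\{fg:f\in K\}$ is uniformly $\mu$-integrable.
   Context: $L^{0}(\mu)$ carries the topology of convergence in probability. The polar of $C\subset L^{0}(\mu)$ is $C^{\circ}=\{g\in L^{0}(\mu):\sup_{f\in C}\int_\Omega|fg|\,d\mu\leq1\}$; set $E'_K=\mathrm{span}(K^{\circ})$, paired with $E_K$ via $\langle f,g\rangle=\int_\Omega fg\,d\mu$; for $F\subset E'_K$, $\sigma(E_K,F)$ is the associated weak topology on $E_K$. A set is $K$-bounded if it lies in $\lambda K$ for some $\lambda>0$. A topology $\tau$ on $E_K$ is an equicontinuous Köthe topology if $K$ is $\tau$-compact and $\tau$ restricted to $K$-bounded sets equals $\sigma(E_K,F)$ for some $F\subset E'_K$ that is solid, separates the points of $E_K$, and contains a strictly positive element; $F$ is then said to induce $\tau$. Such $\tau$ has the Krein-Šmulian property if a convex set $C\subset E_K$ is $\tau$-closed iff $C\cap\lambda K$ is $\tau$-closed for each $\lambda>0$. Under the Krein-Šmulian property, each $g\in F$ gives a $\tau$-continuous functional $f\mapsto\int_\Omega fg\,d\mu$, yielding a natural map $F\to(E_K,\tau)^{\ast}$; $\tau$ is $F$-regular if $F$ induces $\tau$ and this map is surjective. *)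

(* Defs.v *)
(* L^0(mu) is represented by measurable functions
   T -> R, with every notion made invariant under a.e. equality where the
   paper's notion lives on equivalence classes. *)
From HB Require Import structures.
From mathcomp Require Import all_boot all_order all_algebra.
From mathcomp Require Import all_classical all_reals all_analysis.
From Stdlib Require List.
Set Implicit Arguments. Unset Strict Implicit. Unset Printing Implicit Defensive.
Import Order.TTheory GRing.Theory Num.Theory.
Import numFieldNormedType.Exports.
Local Open Scope classical_set_scope.
Local Open Scope ring_scope.

Section Defs.
Context {d : measure_display} {T : measurableType d} {R : realType}.
Implicit Types (mu : probability T R) (A B C K E F : set (T -> R)).

Definition L0 : set (T -> R) := [set f | measurable_fun setT f].

Definition abs_convex K := forall f h (a b : R), K f -> K h ->
  `|a| + `|b| <= 1 -> K (fun x => a * f x + b * h x).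

Definition convex_fset C := forall f h (t : R), C f -> C h -> 0 <= t <= 1 ->
  C (fun x => t * f x + (1 - t) * h x).

Definition cvg_in_prob mu (u : nat -> T -> R) (f : T -> R) :=
  forall eps : R, 0 < eps ->
    (fun n => mu [set x | (eps < `|u n x - f x|)%R]) @ \oo --> (0 : \bar R).

(* closed for the (metrizable) topology of convergence in probability *)
Definition closed_in_prob mu K := forall (u : nat -> T -> R) f,
  (forall n, K (u n)) -> measurable_fun setT f -> cvg_in_prob mu u f -> K f.

Definition bounded_in_prob mu K := forall eps : R, 0 < eps ->
  exists M : R, 0 < M /\ forall f, K f -> (mu [set x | (M < `|f x|)%R] <= eps%:E)%E.

Inductive lspan A : set (T -> R) :=
| lspan0 : lspan A (fun _ => 0)
| lspan_in f : A f -> lspan A f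
| lspan_comb f h (c : R) : lspan A f -> lspan A h ->
    lspan A (fun x => f x + c * h x).

Definition polar mu C : set (T -> R) :=
  [set g | measurable_fun setT g /\
    forall f, C f -> (\int[mu]_x (`|f x * g x|)%:E <= 1)%E].

Definition pairing mu (f g : T -> R) : R := Rintegral mu setT (fun x => f x * g x).

Definition scale_set (lam : R) K : set (T -> R) := (fun f => fun x => lam * f x) @` K.

Definition K_bounded K B := exists lam : R, 0 < lam /\ B `<=` scale_set lam K.

Definition is_topology E (tau : set (set (T -> R))) :=
  [/\ tau E, tau set0, (forall U, tau U -> U `<=` E),
      (forall UU : set (set (T -> R)), UU `<=` tau -> tau (\bigcup_(U in UU) U))
    & (forall U V, tau U -> tau V -> tau (U `&` V))].

Definition sigma_top mu E F : set (set (T -> R)) :=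
  [set U | U `<=` E /\ forall f, U f -> exists (s : seq (T -> R)) (eps : R),
    [/\ 0 < eps, (forall g, List.In g s -> F g) &
      [set h | E h /\ forall g, List.In g s ->
          `|pairing mu h g - pairing mu f g| < eps] `<=` U]].

Definition trace_top (tau : set (set (T -> R))) B : set (set (T -> R)) :=
  [set U `&` B | U in tau].

Definition locally_convex_top E (tau : set (set (T -> R))) :=
  [/\ is_topology E tau,
   (forall f h U, E f -> E h -> tau U -> U (fun x => f x + h x) ->
      exists V W, [/\ tau V, tau W, V f, W h &
        forall v w, V v -> W w -> U (fun x => v x + w x)]),
   (forall (a : R) f U, E f -> tau U -> U (fun x => a * f x) ->
      exists (delta : R) V, [/\ 0 < delta, tau V, V f &
        forall (b : R) v, `|b - a| < delta -> V v -> U (fun x => b * v x)]) &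
   (forall U f, tau U -> U f ->
      exists V, [/\ tau V, V f, V `<=` U & convex_fset V])].

Definition top_compact (tau : set (set (T -> R))) K :=
  forall UU : set (set (T -> R)), UU `<=` tau -> K `<=` \bigcup_(U in UU) U ->
    exists s : seq (set (T -> R)), (forall U, List.In U s -> UU U) /\
      K `<=` \bigcup_(U in [set U | List.In U s]) U.

Definition top_closed E (tau : set (set (T -> R))) C := C `<=` E /\ tau (E `\` C).

Definition Krein_Smulian K (tau : set (set (T -> R))) :=
  forall C, C `<=` lspan K -> convex_fset C ->
    (top_closed (lspan K) tau C <->
     forall lam : R, 0 < lam -> top_closed (lspan K) tau (C `&` scale_set lam K)).

Definition solid mu F := forall g h : T -> R, F g -> measurable_fun setT h ->
  {ae mu, forall x, `|h x| <= `|g x|} -> F h.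

Definition separates_points mu E F := forall f h : T -> R, E f -> E h ->
  ~ {ae mu, forall x, f x = h x} ->
  exists g, F g /\ pairing mu f g <> pairing mu h g.

Definition has_strictly_positive mu F := exists g, F g /\ {ae mu, forall x, 0 < g x}.

Definition induces mu K F (tau : set (set (T -> R))) :=
  [/\ F `<=` lspan (polar mu K), solid mu F, separates_points mu (lspan K) F,
      has_strictly_positive mu F &
      forall B, K_bounded K B ->
        trace_top tau B = trace_top (sigma_top mu (lspan K) F) B].

Definition equicontinuous_Kothe mu K (tau : set (set (T -> R))) :=
  [/\ is_topology (lspan K) tau, top_compact tau K & exists F, induces mu K F tau].

Definition lin_on E (phi : (T -> R) -> R) := forall f h (a : R), E f -> E h ->
  phi (fun x => f x + a * h x) = phi f + a * phi h.

Definition top_continuous E (tau : set (set (T -> R))) (phi : (T -> R) -> R) :=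
  forall O : set R, open O -> tau (E `&` phi @^-1` O).

Definition F_regular mu K F (tau : set (set (T -> R))) :=
  induces mu K F tau /\
  forall phi, lin_on (lspan K) phi -> top_continuous (lspan K) tau phi ->
    exists g, F g /\ forall f, lspan K f -> phi f = pairing mu f g.

Definition uniformly_integrable mu A := forall eps : R, 0 < eps ->
  exists M : R, forall h, A h ->
    (\int[mu]_(x in [set x | (M < `|h x|)%R]) (`|h x|)%:E <= eps%:E)%E.

End Defs.

(* Main.v *)
Require Import Defs.
From Stdlib Require List.
From mathcomp Require Import all_boot all_order all_algebra.
From mathcomp Require Import all_classical all_reals all_analysis.
From mathcomp Require Import ring lra.
Import Order.TTheory GRing.Theory Num.Theory.
Local Open Scope classical_set_scope.
Local Open Scope ring_scope.
Set Implicit Arguments. Unset Strict Implicit. Unset Printing Implicit Defensive.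

Section helpers.
Context {d : measure_display} {T : measurableType d} {R : realType}
  (mu : probability T R).

Lemma meas_gt (h : T -> R) (M : R) : measurable_fun setT h ->
  measurable [set x | M < h x].
Proof.
move=> mh; have := mh measurableT `]M, +oo[%classic (measurable_itv _).
rewrite setTI; congr measurable; apply/seteqP; split => x /=;
  by rewrite in_itv /= andbT.
Qed.

Lemma mu_fin (A : set T) : measurable A -> (mu A \is a fin_num)%E.
Proof.
move=> mA; rewrite ge0_fin_numE ?measure_ge0 //.
exact: (le_lt_trans (probability_le1 _ mA) (ltey _)).
Qed.

Lemma int_abs (D : set T) (h : T -> R) : measurable D ->
  mu.-integrable D (EFin \o h) -> mu.-integrable D (EFin \o (fun x => `|h x|)).
Proof.
move=> mD ih; apply: (eq_integrable mD (abse \o (EFin \o h))).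
  by move=> x _ /=; rewrite -abse_EFin.
exact: integrable_abse.
Qed.

Lemma int_sub (D : set T) (h : T -> R) : measurable D ->
  mu.-integrable setT (EFin \o h) -> mu.-integrable D (EFin \o h).
Proof. by move=> mD ih; apply: integrableS ih. Qed.

Lemma intabs_mono (h : T -> R) (A B : set T) : measurable A -> measurable B ->
  A `<=` B -> mu.-integrable setT (EFin \o h) ->
  \int[mu]_(x in A) `|h x| <= \int[mu]_(x in B) `|h x|.
Proof.
move=> mA mB AB ih; rewrite -(setDUK AB) Rintegral_setU //.
- by rewrite lerDl Rintegral_ge0.
- exact: measurableD.
- by rewrite setDUK //; apply: int_abs => //; exact: int_sub.
- by rewrite disj_set2E setDIK.
Qed.

Lemma tail_measure (E : nat -> set T) (n : nat) (c : R) :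
  (forall j, measurable (E j)) -> 0 <= c ->
  (forall j, (n <= j)%N -> (mu (E j) <= (c / (2 ^ j.+1)%:R)%:E)%E) ->
  (mu (\bigcup_(j in [set j | (n <= j)%N]) E j) <= c%:E)%E.
Proof.
move=> mE c0 hE.
have mU : measurable (\bigcup_(j in [set j | (n <= j)%N]) E j).
  by apply: bigcup_measurable => k _; exact: mE.
apply: (le_trans (@measure_sigma_subadditive_tail _ _ _ mu _ E n mE mU _)).
  move=> x [j /= nj Ejx]; exists j => //=; rewrite /setC /= => jn.
  by move: jn; rewrite ltnNge nj.
have Het := @epsilon_trick0 R c (fun j => (n <= j)%N) c0.
apply: (le_trans _ Het).
rewrite eseries_cond.
apply: lee_nneseries => [i _ _|i /andP[_ ni]]; first exact: measure_ge0.
exact: hE.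
Qed.

End helpers.

Section core.
Context {d : measure_display} {T : measurableType d} {R : realType}
  (mu : probability T R) (H : set (T -> R)) (C : R).
Hypothesis Hint : forall h, H h -> mu.-integrable setT (EFin \o h).
Hypothesis HC : forall h, H h -> \int[mu]_x `|h x| <= C.
Hypothesis HN : forall h, H h -> H (fun x => - h x).

Lemma Hmeas h : H h -> measurable_fun setT h.
Proof.
by move=> Hh; apply/measurable_realfun.measurable_EFinP; exact: measurable_int (Hint Hh).
Qed.

Lemma markov_H h (M : R) : H h -> 0 < M -> (mu [set x | (M < h x)%R] <= (C / M)%:E)%E.
Proof.
move=> Hh M0; set E := [set x | M < h x].
have mE : measurable E by apply: meas_gt; exact: Hmeas.
have ih := Hint Hh.
have h1 : M * fine (mu E) <= C.
  rewrite -Rintegral_cst //.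
  apply: (@le_trans _ _ (\int[mu]_(x in E) `|h x|)).
    apply: le_Rintegral => //.
    - exact: finite_measure_integrable_cst.
    - by apply: int_abs => //; exact: int_sub.
    - by move=> x Ex; apply: (le_trans (ltW Ex)); exact: ler_norm.
  apply: le_trans (HC Hh).
  by apply: intabs_mono.
rewrite -(fineK (mu_fin mu mE)) lee_fin.
by rewrite ler_pdivlMr // mulrC.
Qed.

Lemma split_abs h (M : R) : H h -> 0 <= M ->
  \int[mu]_(x in [set x | M < `|h x|]) `|h x| =
  \int[mu]_(x in [set x | M < h x]) h x +
  \int[mu]_(x in [set x | M < - h x]) (- h x).
Proof.
move=> Hh M0; have mh := Hmeas Hh.
have m1 : measurable [set x | M < h x] by exact: meas_gt.
have m2 : measurable [set x | M < - h x].
  by apply: meas_gt; exact: measurableT_comp.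
have -> : [set x | M < `|h x|] = [set x | M < h x] `|` [set x | M < - h x].
  by apply/seteqP; split => x /=; rewrite ltr_normr => /orP.
rewrite Rintegral_setU //.
- congr (_ + _); apply: eq_Rintegral => x; rewrite inE /= => hx.
    by rewrite gtr0_norm // (le_lt_trans M0 hx).
  by rewrite ltr0_norm // -oppr_gt0 (le_lt_trans M0 hx).
- by apply: int_abs; [exact: measurableU| apply: int_sub => //; [exact: measurableU|exact: Hint]].
- rewrite disj_set2E; apply/eqP/seteqP; split => x //= [h1 h2].
  by move: h1 h2 M0; lra.
Qed.


Hypothesis Hcl : forall u : nat -> T -> R, (forall n, H (u n)) ->
  exists2 x, H x & forall (k : nat) (S : nat -> set T),
    (forall i, measurable (S i)) ->
    forall eta : R, 0 < eta -> forall N, exists2 n, (N <= n)%N &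
      forall i, (i <= k)%N ->
        `|\int[mu]_(y in S i) u n y - \int[mu]_(y in S i) x y| < eta.

Theorem core_UI : uniformly_integrable mu H.
Proof.
move=> e e0.
apply: contrapT => /forallNP nUI.
have step1 : forall M : R, 0 < M -> exists h, H h /\
    e / 2 < \int[mu]_(x in [set x | M < h x]) h x.
  move=> M M0; have /existsNP[h] := nUI M.
  move=> /not_implyP[Hh /negP]; rewrite -ltNge => hlt.
  have ih := Hint Hh.
  have mA : measurable [set x | M < `|h x|].
    by apply: meas_gt; apply: measurableT_comp => //; exact: Hmeas.
  rewrite -[X in (_ < X)%E]fineK in hlt; last first.
    by apply: integrable_fin_num => //; apply: int_abs => //; exact: int_sub.
  rewrite lte_fin in hlt.
  have {}hlt : e < \int[mu]_(x in [set x | M < `|h x|]) `|h x| := hlt.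
  rewrite split_abs // ?(ltW M0) // in hlt.
  case: (lerP (\int[mu]_(x in [set x | M < h x]) h x) (e / 2)) => [hle|hgt];
    last by exists h.
  exists (fun x => - h x); split; first exact: HN.
  by move: hlt hle; lra.
have hfE : forall M : R, exists h : T -> R, 0 < M -> H h /\
    e / 2 < \int[mu]_(x in [set x | M < h x]) h x.
  move=> M; case: (boolP (0 < M)) => M0.
    by have [h ?] := step1 M M0; exists h.
  by exists (fun=> 0) => M0'; exfalso; move/negP: M0; apply.
have [hf hfP] := choice hfE.
have e16 : 0 < e / 16 by rewrite divr_gt0.
have dlE : forall h : T -> R, exists r : R, H h -> 0 < r /\
    forall A, measurable A -> (mu A < r%:E)%E ->
      \int[mu]_(x in A) `|h x| < e / 16.
  move=> h; case: (pselect (H h)) => Hh; last by exists 1.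
  have [r [r0 hr]] := integral_normr_continuous (Hint Hh) e16.
  by exists r.
have [dl dlP] := choice dlE.
pose C' := `|C| + 1.
have C'0 : 0 < C' by rewrite /C'; have := normr_ge0 C; lra.
have CC' : C <= C' by rewrite /C'; have := ler_norm C; lra.
pose Mk (k : nat) (r : R) := C' * (2 ^ k.+2)%:R / r.
pose rho := fix rho (k : nat) : R := if k is k'.+1 then
  Num.min (Num.min (rho k') (dl (hf (Mk k' (rho k'))))) (k'.+2%:R^-1) else 1.
pose M k := Mk k (rho k).
pose h k := hf (M k).
have rhoS k : rho k.+1 = Num.min (Num.min (rho k) (dl (h k))) (k.+2%:R^-1) by [].
have rho0 : rho 0%N = 1 by [].
have Mpos r k : 0 < r -> 0 < Mk k r.
  by move=> r0; rewrite /Mk divr_gt0 // mulr_gt0 // ltr0n expn_gt0.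
have rho_pos : forall k, 0 < rho k.
  elim => [|k IH]; first by rewrite rho0.
  have [Hk _] := hfP _ (Mpos _ k IH).
  have [dl0 _] := dlP _ Hk.
  by rewrite rhoS !lt_min IH dl0 invr_gt0 ltr0n.
have M_pos k : 0 < M k by exact: Mpos.
have Hh k : H (h k) /\ e / 2 < \int[mu]_(x in [set x | M k < h k x]) h k x.
  exact: hfP.
have rho_le k : rho k <= k.+1%:R^-1.
  by case: k => [|k]; [rewrite rho0 invr1 | rewrite rhoS ge_min lexx orbT].
have rho_step k : rho k.+1 <= rho k by rewrite rhoS !ge_min lexx.
have rho_dec : forall k j, (k <= j)%N -> rho j <= rho k.
  move=> k; elim => [|j IH]; first by rewrite leqn0 => /eqP->.
  rewrite leq_eqVlt => /orP[/eqP->//|]; rewrite ltnS => kj.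
  exact: le_trans (rho_step j) (IH kj).
have rho_dl k : rho k.+1 <= dl (h k) by rewrite rhoS !ge_min lexx orbT.
pose E k := [set x | M k < h k x].
have mE k : measurable (E k) by apply: meas_gt; exact: Hmeas (Hh k).1.
have muE j : (mu (E j) <= ((rho j / 2) / (2 ^ j.+1)%:R)%:E)%E.
  apply: le_trans (markov_H (Hh j).1 (M_pos j)) _; rewrite lee_fin.
  apply: (@le_trans _ _ (C' / M j)).
    by apply: ler_wpM2r => //; rewrite invr_ge0 ltW.
  have r0 := rho_pos j.
  rewrite /M /Mk expnS natrM.
  have p0 : (2 ^ j.+1)%:R != 0 :> R by rewrite pnatr_eq0 expn_eq0.
  rewrite le_eqVlt; apply/orP; left; apply/eqP; field.
  by rewrite p0 (gt_eqF C'0) (gt_eqF r0).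
pose Tl n := \bigcup_(j in [set j | (n <= j)%N]) E j.
have mT n : measurable (Tl n) by apply: bigcup_measurable => j _; exact: mE.
have muT n : (mu (Tl n) <= (rho n / 2)%:E)%E.
  apply: tail_measure => //.
    by rewrite divr_ge0 // ltW.
  move=> j nj; apply: le_trans (muE j) _; rewrite lee_fin.
  apply: ler_wpM2r; first by rewrite invr_ge0.
  apply: ler_wpM2r => //; exact: rho_dec.
have muT_lt n : (mu (Tl n) < (rho n)%:E)%E.
  apply: le_lt_trans (muT n) _; rewrite lte_fin.
  by have := rho_pos n; lra.
have fwd k A : measurable A -> A `<=` Tl k.+1 ->
    \int[mu]_(x in A) `|h k x| < e / 16.
  move=> mA AT; have [_ dP] := dlP _ (Hh k).1; apply: dP => //.
  apply: le_lt_trans (le_measure mu (mem_set mA) (mem_set (mT k.+1)) AT) _.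
  by apply: lt_le_trans (muT_lt k.+1) _; rewrite lee_fin.
have muT_small r : 0 < r -> exists n, (mu (Tl n) < r%:E)%E.
  move=> r0; have [n hn] := ltr_add_invr r0; exists n.
  apply: lt_trans (muT_lt n) _; rewrite lte_fin.
  by apply: le_lt_trans (rho_le n) _; rewrite add0r in hn.
pose D k := E k `\` Tl k.+1.
have mD k : measurable (D k) by apply: measurableD.
have ET j n : (n <= j)%N -> E j `<=` Tl n by move=> nj x Ex; exists j.
have Ddisj a b x : (a < b)%N -> D a x -> D b x -> False.
  by move=> ab [_ nT] [Eb _]; apply: nT; exact: (ET b a.+1 ab).
have Dlow k : 7 * e / 16 < \int[mu]_(x in D k) h k x.
  have ih := Hint (Hh k).1.
  have Edec : E k = D k `|` (E k `&` Tl k.+1).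
    apply/seteqP; split => x /=.
      by move=> Ex; case: (pselect (Tl k.+1 x)) => Tx; [right|left].
    by move=> [[]|[]].
  have := (Hh k).2; rewrite -/(E k) Edec Rintegral_setU //; last 3 first.
  - exact: measurableI.
  - by rewrite -Edec; exact: int_sub.
  - by rewrite disj_set2E; apply/eqP/seteqP; split => x // [[_ nT] [_ Tx]].
  have mI : measurable (E k `&` Tl k.+1) by exact: measurableI.
  have := le_normr_Rintegral mI (int_sub mI ih).
  have := fwd k _ mI (@subIsetr _ _ _).
  set a := \int[mu]_(x in D k) h k x.
  set b := \int[mu]_(x in _ `&` _) h k x.
  set c := \int[mu]_(x in _ `&` _) `|h k x|.
  move=> hc hbc.
  have hb : b <= `|b| by exact: ler_norm.
  lra.
have [x Hx clx] := Hcl (fun n => (Hh n).1).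
have [dx0 dxP] := dlP x Hx.
have [N hN] := muT_small (dl x) dx0.
pose B (m k : nat) (f : nat -> nat) :=
  \bigcup_(j in [set j | (m <= j < k)%N]) D (f j).
have mB m k f : measurable (B m k f).
  by apply: bigcup_measurable => j _; exact: mD.
have nxtE : forall p : nat * (nat -> nat), exists n : nat,
    (N + (p.2 p.1.-1).+1 <= n)%N /\ forall m, (m <= p.1)%N ->
    `|\int[mu]_(y in B m p.1 p.2) h n y - \int[mu]_(y in B m p.1 p.2) x y|
      < e / 16.
  move=> [k f] /=.
  have [n hn1 hn2] := clx k (fun m => B m k f) (fun m => mB m k f) _ e16
    (N + (f k.-1).+1).
  by exists n; split.
have [nxt' nxtP'] := choice nxtE.
pose nxt k f := nxt' (k, f).
have nxtP k f := nxtP' (k, f).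
pose F := fix F (k : nat) : nat -> nat := if k is k'.+1 then
  (fun j => if j == k' then nxt k' (F k') else F k' j) else (fun=> 0%N).
pose s k := nxt k (F k).
have Fs : forall k j, (j < k)%N -> F k j = s j.
  elim => // k IH j; rewrite ltnS leq_eqVlt => /orP[/eqP->|jk].
    by rewrite /= eqxx.
  by rewrite /= ifF ?IH // ltn_eqF.
have sN k : (N <= s k)%N.
  have h1 : (N + (F k k.-1).+1 <= s k)%N := (nxtP k (F k)).1.
  by apply: leq_trans h1; rewrite leq_addr.
have s_step k : (s k < s k.+1)%N.
  have h1 : (N + (F k.+1 k).+1 <= s k.+1)%N := (nxtP k.+1 (F k.+1)).1.
  rewrite (Fs k.+1 k (ltnSn k)) in h1; by apply: leq_trans h1; rewrite leq_addl.
have s_mono : forall j k, (j < k)%N -> (s j < s k)%N.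
  move=> j; elim => // k IH; rewrite ltnS leq_eqVlt => /orP[/eqP->//|jk].
  exact: ltn_trans (IH jk) (s_step k).
have s_ge : forall k, (k <= s k)%N.
  by elim => // k IH; apply: leq_ltn_trans IH (s_step k).
have BF m k : B m k (F k) = B m k s.
  apply/seteqP; split => y [j /= /andP[mj jk] Dy]; exists j;
    rewrite /= ?mj ?jk //; by rewrite ?Fs // in Dy *; rewrite -Fs.
have back m k : (m <= k)%N ->
    `|\int[mu]_(y in B m k s) h (s k) y - \int[mu]_(y in B m k s) x y| < e / 16.
  by move=> mk; have [_ +] := nxtP k (F k); rewrite /= -BF; apply.
have [x' Hx' clx'] := Hcl (fun n => (Hh (s n)).1).
have [dx'0 dx'P] := dlP x' Hx'.
have [m hm] := muT_small (dl x') dx'0.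
pose U := \bigcup_(j in [set j | (m <= j)%N]) D (s j).
have mU : measurable U by apply: bigcup_measurable => j _; exact: mD.
have DsT j n : (n <= j)%N -> D j `<=` Tl n by move=> nj y [Ey _]; exact: ET Ey.
have UT : U `<=` Tl m.
  move=> y [j /= mj Dy]; apply: DsT Dy; exact: leq_trans mj (s_ge j).
have [k mk hk] := clx' 0%N (fun=> U) (fun=> mU) _ e16 m.
have {hk} hk := hk 0%N (leq0n 0).
pose U' := \bigcup_(j in [set j | (k < j)%N]) D (s j).
have mU' : measurable U' by apply: bigcup_measurable => j _; exact: mD.
have Ueq : U = (B m k s `|` D (s k)) `|` U'.
  apply/seteqP; split => y.
    move=> [j /= mj Dy]; case: (ltngtP j k) => [jk|kj|jk].
    - by left; left; exists j => //=; rewrite mj jk.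
    - by right; exists j.
    - by left; right; rewrite -jk.
  move=> [[[j /= /andP[mj jk] Dy]|Dy]|[j /= kj Dy]].
  - by exists j.
  - by exists k.
  - by exists j => //=; rewrite (leq_trans mk) // ltnW.
have ih := Hint (Hh (s k)).1.
have dec : \int[mu]_(y in U) h (s k) y =
    \int[mu]_(y in B m k s) h (s k) y + \int[mu]_(y in D (s k)) h (s k) y +
    \int[mu]_(y in U') h (s k) y.
  rewrite Ueq Rintegral_setU //; last 3 first.
  - exact: measurableU.
  - by rewrite -Ueq; exact: int_sub.
  - rewrite disj_set2E; apply/eqP/seteqP; split => y // [[[j /= /andP[_ jk] Dy]|Dy] [j' /= kj' Dy']].
      by apply: (Ddisj _ _ _ _ Dy Dy'); apply: s_mono; exact: ltn_trans kj'.
    by apply: (Ddisj _ _ _ _ Dy Dy'); apply: s_mono.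
  rewrite Rintegral_setU //.
  - by apply: int_sub => //; exact: measurableU.
  - rewrite disj_set2E; apply/eqP/seteqP; split => y // [[j /= /andP[_ jk] Dy] Dy'].
    by apply: (Ddisj _ _ _ _ Dy Dy'); apply: s_mono.
rewrite dec in hk.
have b1 := Dlow (s k).
have b2 : `|\int[mu]_(y in U') h (s k) y| < e / 16.
  apply: le_lt_trans (le_normr_Rintegral mU' (int_sub mU' ih)) _.
  apply: fwd => // y [j /= kj Dy]; apply: DsT Dy; exact: s_mono.
have b3 := back m k mk.
have b4 : `|\int[mu]_(y in B m k s) x y| < e / 16.
  apply: le_lt_trans (le_normr_Rintegral (mB m k s) (int_sub (mB m k s) (Hint Hx))) _.
  apply: dxP => //; apply: le_lt_trans hN.
  apply: le_measure => //; try by rewrite inE.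
  by move=> y [j /= _ Dy]; exact: DsT Dy.
have b5 : `|\int[mu]_(y in U) x' y| < e / 16.
  apply: le_lt_trans (le_normr_Rintegral mU (int_sub mU (Hint Hx'))) _.
  apply: dx'P => //; apply: le_lt_trans hm.
  by apply: le_measure => //; rewrite inE.
move: hk b2 b3 b4 b5; rewrite !ltr_norml => /andP[? ?] /andP[? ?] /andP[? ?] /andP[? ?] /andP[? ?].
lra.
Qed.

End core.

Section bridge.
Context {d : measure_display} {T : measurableType d} {R : realType}
  (mu : probability T R).

Lemma lspan_meas (A : set (T -> R)) :
  (forall f, A f -> measurable_fun setT f) ->
  forall f, lspan A f -> measurable_fun setT f.
Proof.
move=> hA f; elim => [|f0 /hA //|f1 h c _ m1 _ m2].
- exact: measurable_cst.
- apply: measurable_realfun.measurable_funD => //.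
  by apply: measurable_realfun.measurable_funM => //; exact: measurable_cst.
Qed.

Lemma polar_meas (K : set (T -> R)) g : lspan (polar mu K) g -> measurable_fun setT g.
Proof. by apply: lspan_meas => f []. Qed.

Lemma polar_bound (K : set (T -> R)) : K `<=` L0 ->
  forall g, lspan (polar mu K) g ->
  exists C : R, forall f, K f -> (\int[mu]_x (`|f x * g x|)%:E <= C%:E)%E.
Proof.
move=> KL g; elim => [|g0 [_ pg]|g1 g2 c Hg1 [C1 IH1] Hg2 [C2 IH2]].
- exists 0 => f Kf; under eq_integral do rewrite mulr0 normr0.
  by rewrite integral0.
- by exists 1.
- exists (C1 + `|c| * C2) => f Kf.
  have mf : measurable_fun setT f := KL _ Kf.
  have m1 : measurable_fun setT g1 := polar_meas Hg1.
  have m2 : measurable_fun setT g2 := polar_meas Hg2.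
  have mfg1 : measurable_fun setT (fun x => `|f x * g1 x|).
    by apply: measurableT_comp => //; exact: measurable_realfun.measurable_funM.
  have mfg2 : measurable_fun setT (fun x => `|f x * g2 x|).
    by apply: measurableT_comp => //; exact: measurable_realfun.measurable_funM.
  apply: (@le_trans _ _ (\int[mu]_x ((`|f x * g1 x|)%:E + (`|c|)%:E * (`|f x * g2 x|)%:E))%E).
    apply: ge0_le_integral => //.
    - apply/measurable_realfun.measurable_EFinP; apply: measurableT_comp => //.
      apply: measurable_realfun.measurable_funM => //.
      apply: measurable_realfun.measurable_funD => //.
      by apply: measurable_realfun.measurable_funM => //; exact: measurable_cst.
    - apply: emeasurable_funD; first exact/measurable_realfun.measurable_EFinP.
      apply: emeasurable_funM; first exact: measurable_cst.
      exact/measurable_realfun.measurable_EFinP.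
    - move=> x _; rewrite -EFinM -EFinD lee_fin mulrDr.
      by rewrite [f x * (c * _)]mulrCA; apply: le_trans (ler_normD _ _) _; rewrite [`|c * _|]normrM.
  rewrite ge0_integralD //.
    all: try (exact/measurable_realfun.measurable_EFinP).
    all: try (by move=> ? _; rewrite mule_ge0).
    all: try (apply: emeasurable_funM; [exact: measurable_cst|
                                       exact/measurable_realfun.measurable_EFinP]).
  rewrite ge0_integralZl_EFin //; last exact/measurable_realfun.measurable_EFinP.
  rewrite EFinD EFinM; apply: leeD; first exact: IH1.
  by apply: lee_wpmul2l => //; exact: IH2.
Qed.


Definition Oset (E : set (T -> R)) (f : T -> R) (k : nat) (G : nat -> T -> R)
  (eta : R) : set (T -> R) :=
  [set h | E h /\ exists r : R, 0 < r /\ forall i, (i <= k)%N ->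
    `|pairing mu h (G i) - pairing mu f (G i)| < eta - r].

Lemma inGs (G : nat -> T -> R) k i : (i <= k)%N ->
  List.In (G i) (List.map G (List.seq 0 k.+1)).
Proof.
move=> ik; apply/List.in_map_iff; exists i; split => //.
apply/List.in_seq; split; first exact: PeanoNat.Nat.le_0_l.
by simpl; apply/ssrnat.ltP; rewrite ltnS.
Qed.

Lemma Oset_open (E F : set (T -> R)) f k G eta :
  (forall i, (i <= k)%N -> F (G i)) -> sigma_top mu E F (Oset E f k G eta).
Proof.
move=> FG; split; first by move=> h [].
move=> h [Eh [r [r0 hr]]].
exists (List.map G (List.seq 0 k.+1)), (r / 2); split.
- by rewrite divr_gt0.
- move=> g /List.in_map_iff [i [<- /List.in_seq [_ /ssrnat.ltP]]].
  by rewrite ltnS; exact: FG.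
- move=> h' [Eh' hh']; split => //; exists (r / 2); split; first by rewrite divr_gt0.
  move=> i ik; have := hh' _ (inGs G ik); have := hr i ik.
  set a := pairing mu h' (G i); set b := pairing mu h (G i);
  set c := pairing mu f (G i) => hbc hab.
  have := ler_normD (a - b) (b - c); rewrite addrA subrK => habc.
  by move: hbc hab habc; lra.
Qed.

Lemma K_bounded_self (K : set (T -> R)) : K_bounded K K.
Proof.
exists 1; split => // f Kf; exists f => //.
by apply/funext => x; rewrite mul1r.
Qed.

Lemma cluster (K F : set (T -> R)) (tau : set (set (T -> R))) :
  top_compact tau K ->
  (forall B, K_bounded K B ->
     trace_top tau B = trace_top (sigma_top mu (lspan K) F) B) ->
  forall u : nat -> T -> R, (forall n, K (u n)) ->
  exists2 f, K f & forall (k : nat) (G : nat -> T -> R),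
    (forall i, (i <= k)%N -> F (G i)) ->
    forall eta : R, 0 < eta -> forall N, exists2 n, (N <= n)%N &
      forall i, (i <= k)%N -> `|pairing mu (u n) (G i) - pairing mu f (G i)| < eta.
Proof.
move=> Kc tr u Ku; apply: contrapT => ncl.
have hnc : forall f, K f -> exists k G, (forall i, (i <= k)%N -> F (G i)) /\
    exists eta : R, 0 < eta /\ exists N, forall n, (N <= n)%N ->
      exists i, (i <= k)%N /\
        eta <= `|pairing mu (u n) (G i) - pairing mu f (G i)|.
  move=> f Kf; apply: contrapT => H1; apply: ncl; exists f => // k G HG eta eta0 N.
  apply: contrapT => H2; apply: H1; exists k, G; split => //.
  exists eta; split => //; exists N => n Nn; apply: contrapT => H3; apply: H2.
  exists n => // i ik; rewrite ltNge; apply/negP => H4; apply: H3.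
  by exists i; split.
pose UU := [set V | tau V /\ exists N, forall n, (N <= n)%N -> ~ V (u n)].
have UUt : UU `<=` tau by move=> V [].
have cov : K `<=` \bigcup_(V in UU) V.
  move=> f Kf; have [k [G [HG [eta [eta0 [N hN]]]]]] := hnc f Kf.
  pose O := Oset (lspan K) f k G eta.
  have Oo : sigma_top mu (lspan K) F O by exact: Oset_open.
  have : trace_top (sigma_top mu (lspan K) F) K (O `&` K) by exists O.
  rewrite -tr; last exact: K_bounded_self.
  move=> [V tV VK]; exists V.
    split => //; exists N => n Nn Vun.
    have : (V `&` K) (u n) by split.
    rewrite VK => -[[_ [r [r0 hr]]] _].
    have [i [ik hi]] := hN n Nn.
    by have := hr i ik; move: hi r0; lra.
  have : (O `&` K) f.
    split => //; split; first exact: lspan_in.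
    exists (eta / 2); split; first by rewrite divr_gt0.
    by move=> i _; rewrite subrr normr0; lra.
  by rewrite -VK => -[].
have [s [sUU scov]] := Kc UU UUt cov.
have : exists N, forall V, List.In V s -> forall n, (N <= n)%N -> ~ V (u n).
  elim: s sUU {scov} => [|V s IH] sUU; first by exists 0%N.
  have [N1 h1] := IH (fun W hW => sUU W (or_intror hW)).
  have [_ [N2 h2]] := sUU V (or_introl erefl).
  exists (maxn N1 N2) => W [<-|hW] n Nn.
    by apply: h2; apply: leq_trans Nn; rewrite leq_maxr.
  by apply: h1 => //; apply: leq_trans Nn; rewrite leq_maxl.
move=> [N hN].
have [V /= sV Vu] := scov _ (Ku N).
exact: hN V sV N (leqnn N) Vu.
Qed.


Lemma pairing_indic (f g : T -> R) (S : set T) :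
  pairing mu f (fun y => g y * \1_S y) = \int[mu]_(y in S) (f y * g y).
Proof.
rewrite /pairing [RHS]Rintegral_mkcond; apply: eq_Rintegral => y _.
rewrite /patch indicE; case: (y \in S) => /=; first by rewrite mulr1.
by rewrite mulr0 mulr0.
Qed.

End bridge.

Unset Implicit Arguments.

Theorem lemma5p8 (d : measure_display) (T : measurableType d) (R : realType)
  (mu : probability T R) (K : set (T -> R)) (tau : set (set (T -> R)))
  (F : set (T -> R)) :
  measure_is_complete mu ->
  K `<=` L0 -> abs_convex K -> closed_in_prob mu K -> bounded_in_prob mu K ->
  locally_convex_top (lspan K) tau ->
  equicontinuous_Kothe mu K tau ->
  Krein_Smulian K tau ->
  F_regular mu K F tau ->
  forall g, F g -> uniformly_integrable mu [set (fun x => f x * g x) | f in K].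
Proof.
move=> _ KL0 Kac _ _ _ [_ Kcomp _] _ [[Fsub solidF _ _ trF] _] g Fg.
have pg := Fsub g Fg.
have mg := polar_meas pg.
have [C hC] := polar_bound KL0 pg.
have fin f : K f -> (\int[mu]_x (`|f x * g x|)%:E \is a fin_num)%E.
  move=> Kf; rewrite ge0_fin_numE; last exact: integral_ge0.
  exact: le_lt_trans (hC f Kf) (ltey _).
have mfg f : K f -> measurable_fun setT (fun x => f x * g x).
  by move=> Kf; apply: measurable_realfun.measurable_funM => //; exact: KL0.
apply: (@core_UI _ _ _ mu _ C).
- move=> h [f Kf <-]; apply/integrableP; split.
    by apply/measurable_realfun.measurable_EFinP; exact: mfg.
  have := fin f Kf; rewrite ge0_fin_numE; last exact: integral_ge0.
  move=> hlt; rewrite (@eq_integral _ _ _ mu setT (fun x => (`|f x * g x|)%:E)) // => x _.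
- move=> h [f Kf <-]; rewrite -lee_fin /Rintegral fineK //; first exact: hC.
  exact: fin.
- move=> h [f Kf <-]; exists (fun x => - f x).
    have := Kac f f (-1) 0 Kf Kf.
    rewrite normrN normr1 normr0 addr0 lexx => /(_ erefl).
    congr K; apply/funext => x; rewrite mulN1r mul0r addr0 //.
  by apply/funext => x; rewrite mulNr.
- move=> u Hu.
  have hfsE : forall n, exists f, K f /\ (fun x => f x * g x) = u n.
    by move=> n; have [f Kf fu] := Hu n; exists f.
  have [fs hfs] := choice hfsE.
  have [f Kf clf] := cluster Kcomp trF (fun n => (hfs n).1).
  exists (fun x => f x * g x); first by exists f.
  move=> k S mS eta eta0 N.
  have FS : forall i, (i <= k)%N -> F (fun y => g y * \1_(S i) y).
    move=> i _; apply: (solidF g) => //.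
      apply: measurable_realfun.measurable_funM => //.
    apply: aeW => x; rewrite normrM indicE.
    by case: (x \in S i) => /=; rewrite ?normr1 ?mulr1 ?normr0 ?mulr0.
  have [n Nn hn] := clf k _ FS eta eta0 N.
  exists n => // i ik; have := hn i ik.
  by rewrite !pairing_indic -(hfs n).2.
Qed.
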